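(* Let $E$ be a finite set and $\mathscr C$ a collection of nonempty, pairwise incomparable (under inclusion) subsets of $E$. Then $\mathscr C$ is the set of circuits of a matroid on $E$ if and only if $\mathscr C$ satisfies the following axiom (C3)$''$: whenever $C_1,C_2\in\mathscr C$ with $e_1\in C_1-C_2$, $e_2\in C_2-C_1$, $e\in C_1\cap C_2$, and $(C_1-e_1)\cup(C_2-e_2)$ contains no member of $\mathscr C$, there is $C_3\in\mathscr C$ with $\{e_1,e_2\}\subseteq C_3\subseteq (C_1\cup C_2)-e$. *)

(* Defs.v *)
From mathcomp Require Import all_boot.
Set Implicit Arguments. Unset Strict Implicit. Unset Printing Implicit Defensive.

Definition is_matroid (E : finType) (I : {set {set E}}) : Prop :=
  [/\ set0 \in I,
      (forall A B : {set E}, B \in I -> A \subset B -> A \in I) &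
      (forall A B : {set E}, A \in I -> B \in I -> #|A| < #|B| ->
         exists2 e, e \in B :\: A & e |: A \in I)].

Definition circuits (E : finType) (I : {set {set E}}) : {set {set E}} :=
  [set C : {set E} | (C \notin I) &&
     [forall D : {set E}, (D \proper C) ==> (D \in I)]].

Definition C3pp (E : finType) (Cs : {set {set E}}) : Prop :=
  forall (C1 C2 : {set E}) (e1 e2 e : E),
    C1 \in Cs -> C2 \in Cs ->
    e1 \in C1 :\: C2 -> e2 \in C2 :\: C1 -> e \in C1 :&: C2 ->
    (forall C : {set E}, C \in Cs -> ~~ (C \subset (C1 :\ e1) :|: (C2 :\ e2))) ->
    exists2 C3, C3 \in Cs & [set e1; e2] \subset C3 /\ C3 \subset (C1 :|: C2) :\ e.

(* Main.v *)
Require Import Defs.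
From mathcomp Require Import all_boot zify.
Set Implicit Arguments. Unset Strict Implicit. Unset Printing Implicit Defensive.

Lemma circP (E : finType) (I : {set {set E}}) (C : {set E}) :
  reflect (C \notin I /\ forall D : {set E}, D \proper C -> D \in I) (C \in circuits I).
Proof.
rewrite inE; apply: (iffP andP) => [[H1 /forallP H2]|[H1 H2]]; split => //.
  by move=> D /(implyP (H2 D)).
by apply/forallP => D; apply/implyP/H2.
Qed.

Lemma mat_sub (E : finType) (I : {set {set E}}) (A B : {set E}) :
  is_matroid I -> B \in I -> A \subset B -> A \in I.
Proof. by case=> _ H _; apply: H. Qed.

Lemma dep_circ (E : finType) (I : {set {set E}}) (S : {set E}) :
  S \notin I -> exists2 C, C \in circuits I & C \subset S.
Proof.
move=> HS; have [C HC sub] := minset_exists (P := [pred B | B \notin I]) HS.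
exists C => //; apply/circP; split; first exact: (minsetp HC).
move=> D pD; apply/negPn/negP => HD.
have := minsetinf HC HD (proper_sub pD) => eD.
by move: pD; rewrite eD properxx.
Qed.

Lemma extend (E : finType) (I : {set {set E}}) (S J : {set E}) :
  is_matroid I -> J \in I -> J \subset S -> forall n (A : {set E}), #|J| - #|A| = n ->
  A \in I -> A \subset S -> #|A| <= #|J| ->
  exists B, [/\ B \in I, A \subset B, B \subset S & #|B| = #|J|].
Proof.
move=> M HJ JS; elim=> [|n IH] A Hn HA AS le.
  by exists A; split => //; lia.
have lt : #|A| < #|J| by lia.
case: M => _ _ /(_ A J HA HJ lt) [e] eJA HeA.
move: eJA; rewrite inE => /andP [eA eJ].
have [||||B [B1 B2 B3 B4]] := IH (e |: A) => //.
- by rewrite cardsU1 eA; lia.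
- by rewrite subUset sub1set AS (subsetP JS).
- by rewrite cardsU1 eA; lia.
by exists B; split => //; apply: subset_trans B2; apply: subsetUr.
Qed.

Lemma circ_unique (E : finType) (I : {set {set E}}) (Y : {set E}) x (C C' : {set E}) :
  is_matroid I -> Y \in I -> C \in circuits I -> C' \in circuits I ->
  C \subset x |: Y -> C' \subset x |: Y -> C = C'.
Proof.
move=> M HY /circP [HC1 HC2] /circP [HC'1 HC'2] CS C'S.
apply/eqP/negPn/negP => neq.
have nsub : ~~ (C \subset C').
  apply/negP => s; have : C \proper C' by rewrite properEneq neq.
  by move/HC'2; apply/negP.
have [y yC yC'] := subsetPn nsub.
have xY : x \notin Y.
  apply/negP => xY; move/negP: HC1; apply; apply: (mat_sub M HY).
  by apply: (subset_trans CS); rewrite subUset sub1set xY subxx.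
have pC : C :\ y \proper C by rewrite properD1.
have Cy := HC2 _ pC.
have [||B [B1 B2 B3 B4]] := @extend _ _ (x |: Y) Y M HY (subsetUr _ _) _ (C :\ y) erefl Cy.
- by apply: subset_trans CS; apply: subsetDl.
- have := subset_leq_card CS; rewrite cardsU1 xY (cardsD1 y C) yC; lia.
have yB : y \notin B.
  apply/negP => yB; move/negP: HC1; apply; apply: (mat_sub M B1).
  apply/subsetP => z zC; case: (eqVneq z y) => [->//|ne].
  by apply: (subsetP B2); rewrite !inE ne.
have : C' \subset B.
  apply/subsetP => z zC'; apply/negPn/negP => zB.
  have zy : z != y by apply: contraNneq yC' => <-.
  have : B \subset ((x |: Y) :\ y) :\ z.
    apply/subsetP => w wB; have := subsetP B3 _ wB; rewrite !inE => ->.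
    by rewrite andbT; apply/andP; split; apply/eqP => ew; move: wB; rewrite ew; apply/negP.
  move/subset_leq_card; rewrite B4.
  have h1 := cardsD1 y (x |: Y); have h2 := cardsD1 z ((x |: Y) :\ y).
  rewrite cardsU1 xY (subsetP CS _ yC) in h1.
  have := subsetP C'S _ zC'; rewrite !inE => zxY.
  rewrite !inE zy zxY in h2.
  move: h1 h2 => /= h1 h2; rewrite h2 in h1; move/eqP: h1; rewrite eqn_add2l => /eqP ->; by rewrite add1n ltnn.
by move/(mat_sub M B1); apply/negP.
Qed.

Definition Ind (E : finType) (Cs : {set {set E}}) : {set {set E}} :=
  [set A : {set E} | [forall C in Cs, ~~ (C \subset A)]].

Lemma indP (E : finType) (Cs : {set {set E}}) (A : {set E}) :
  reflect (forall C, C \in Cs -> ~~ (C \subset A)) (A \in Ind Cs).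
Proof.
rewrite inE; apply: (iffP forallP) => H C.
  by move=> HC; have := H C; rewrite HC.
by apply/implyP/H.
Qed.

Lemma indPn (E : finType) (Cs : {set {set E}}) (A : {set E}) :
  A \notin Ind Cs -> exists2 C, C \in Cs & C \subset A.
Proof.
move=> H; case: (boolP [exists C in Cs, C \subset A]).
  by case/existsP => C /andP [] ; exists C.
rewrite negb_exists => /forallP H2; move/negP: H; case.
by apply/indP => C HC; have := H2 C; rewrite HC.
Qed.

Lemma ind_sub (E : finType) (Cs : {set {set E}}) (A B : {set E}) :
  B \in Ind Cs -> A \subset B -> A \in Ind Cs.
Proof.
move=> /indP HB AB; apply/indP => C HC; apply/negP => CA.
by move: (HB C HC); rewrite (subset_trans CA AB).
Qed.

Lemma elim_weak (E : finType) (Cs : {set {set E}}) :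
  (forall C D : {set E}, C \in Cs -> D \in Cs -> C \subset D -> C = D) ->
  C3pp Cs ->
  forall n (C1 C2 : {set E}) e, #|C1 :|: C2| <= n -> C1 \in Cs -> C2 \in Cs ->
  C1 != C2 -> e \in C1 -> e \in C2 ->
  exists2 C3, C3 \in Cs & C3 \subset (C1 :|: C2) :\ e.
Proof.
move=> anti c3 n; elim: n => [|n IH] C1 C2 e hn H1 H2 neq eC1 eC2.
  have : 0 < #|C1 :|: C2| by apply/card_gt0P; exists e; rewrite inE eC1.
  by rewrite leqn0 in hn; rewrite (eqP hn).
have n12 : ~~ (C1 \subset C2).
  by apply/negP => s; move: neq; rewrite (anti C1 C2 H1 H2 s) eqxx.
have n21 : ~~ (C2 \subset C1).
  by apply/negP => s; move: neq; rewrite (anti C2 C1 H2 H1 s) eqxx.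
have [e1 e1C1 e1C2] := subsetPn n12.
have [e2 e2C2 e2C1] := subsetPn n21.
case: (boolP [exists C in Cs, C \subset (C1 :\ e1) :|: (C2 :\ e2)]).
  case/existsP => C /andP [HC sub].
  case eC: (e \in C).
    have e1C : e1 \notin C.
      by apply/negP => /(subsetP sub); rewrite !inE eqxx (negbTE e1C2) /= ?andbF.
    have e2C : e2 \notin C.
      by apply/negP => /(subsetP sub); rewrite !inE eqxx (negbTE e2C1) /= ?andbF.
    have pr : C :|: C1 \proper C1 :|: C2.
      apply/properP; split.
        apply/subsetP => z; rewrite !inE => /orP [/(subsetP sub)|->//].
        by rewrite !inE => /orP [/andP [_ ->]|/andP [_ ->]]; rewrite ?orbT.
      by exists e2; rewrite !inE ?e2C2 ?orbT // negb_or e2C.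
    have [||C' HC' sub'] := IH C C1 e _ HC H1 _ eC eC1.
    - by move: (proper_card pr) => h; rewrite -ltnS; exact: (leq_trans h hn).
    - by apply/negP => /eqP eCC1; move: e1C; rewrite eCC1 e1C1.
    exists C' => //; apply: (subset_trans sub'); apply/subsetP => z.
    rewrite !inE => /andP [-> /orP [/(subsetP sub)|->//]].
    by rewrite !inE => /orP [/andP [_ ->]|/andP [_ ->]]; rewrite ?orbT.
  exists C => //; apply/subsetP => z zC.
  have ze : z != e by apply/negP => /eqP ze; move: eC; rewrite -ze zC.
  move: (subsetP sub z zC); rewrite !inE ze /=.
  by case/orP => /andP [_ ->]; rewrite ?orbT.
rewrite negb_exists => /forallP H.
have [||||C3 HC3 [_ sub]] := c3 C1 C2 e1 e2 e H1 H2.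
- by rewrite inE e1C1 e1C2.
- by rewrite inE e2C2 e2C1.
- by rewrite inE eC1 eC2.
- by move=> C HC; have := H C; rewrite HC.
by exists C3.
Qed.

Lemma aug (E : finType) (Cs : {set {set E}}) :
  (forall C D : {set E}, C \in Cs -> D \in Cs -> C \subset D -> C = D) ->
  C3pp Cs ->
  forall n (A B : {set E}), #|A :\: B| <= n -> A \in Ind Cs -> B \in Ind Cs ->
  #|A| < #|B| -> exists2 e, e \in B :\: A & e |: A \in Ind Cs.
Proof.
move=> anti c3 n; elim: n => [|n IH] A B hn HA HB lt.
- have AB : A \subset B.
    apply/subsetP => z zA; apply/negPn/negP => zB.
    have : 0 < #|A :\: B| by apply/card_gt0P; exists z; rewrite inE zB.
    by rewrite leqn0 in hn; rewrite (eqP hn).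
  have : ~~ (B \subset A).
    by apply/negP => /subset_leq_card; rewrite leqNgt lt.
  case/subsetPn => e eB eA; exists e; first by rewrite inE eA.
  by apply: (ind_sub HB); rewrite subUset sub1set eB.
case: (boolP (A \subset B)) => [AB|].
  have : ~~ (B \subset A).
    by apply/negP => /subset_leq_card; rewrite leqNgt lt.
  case/subsetPn => e eB eA; exists e; first by rewrite inE eA.
  by apply: (ind_sub HB); rewrite subUset sub1set eB.
case/subsetPn => x xA xB.
case: (boolP [exists e in B :\: A, e |: A \in Ind Cs]).
  by case/existsP => e /andP [h1 h2]; exists e.
rewrite negb_exists => /forallP H.
have [||||e] := IH (A :\ x) B.
- have pr : (A :\ x) :\: B \proper A :\: B.
    apply/properP; split; first by apply/subsetP => z; rewrite !inE => /andP [-> /andP [_ ->]].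
    by exists x; rewrite !inE ?xA ?xB ?eqxx.
  by move: (proper_card pr) => h; rewrite -ltnS; exact: (leq_trans h hn).
- by apply: (ind_sub HA); apply: subsetDl.
- by [].
- by apply: leq_ltn_trans lt; apply: subset_leq_card; apply: subsetDl.
rewrite !inE negb_and negbK => /andP [/orP eA' eB] HeA.
have ex : e != x by apply/negP => /eqP ex; move: xB; rewrite -ex eB.
have eA : e \notin A by case: eA' => [/eqP ex'|//]; move: ex; rewrite ex' eqxx.
set A' := e |: (A :\ x).
have cA' : #|A'| = #|A|.
  rewrite /A' cardsU1 !inE (negbTE eA) andbF /= (cardsD1 x A) xA.
  by rewrite add1n.
have [||||f] := IH A' B.
- have pr : A' :\: B \proper A :\: B.
    apply/properP; split.
      apply/subsetP => z; rewrite !inE => /andP [zB /orP [/eqP ze|/andP [_ ->]]]; rewrite ?zB //.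
      by move: zB; rewrite ze eB.
    by exists x; rewrite !inE ?xA ?xB ?eqxx ?andbF ?orbF //= eq_sym.
  by move: (proper_card pr) => h; rewrite -ltnS; exact: (leq_trans h hn).
- by rewrite inE.
- by [].
- by rewrite cA'.
rewrite !inE negb_or negb_and negbK => /andP [/andP [fe fA'] fB] HfA.
have fx : f != x by apply/negP => /eqP fx; move: xB; rewrite -fx fB.
have fA : f \notin A by case/orP: fA' => [/eqP fx'|//]; move: fx; rewrite fx' eqxx.
have He : e |: A \notin Ind Cs by move: (H e); rewrite in_setD eA eB.
have Hf : f |: A \notin Ind Cs by move: (H f); rewrite in_setD fA fB.
have [Ce HCe Cesub] := indPn He.
have [Cf HCf Cfsub] := indPn Hf.
have HfA2 : f |: A' \in Ind Cs by rewrite inE.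
have nsub := (elimT (indP _ _) HfA2).
have nsubA := (elimT (indP _ _) HA).
have eCe : e \in Ce.
  apply/negPn/negP => eCe; move/negP: (nsubA Ce HCe); apply.
  apply/subsetP => z zC; move: (subsetP Cesub z zC); rewrite inE => /orP [ze|//].
  by move: ze; rewrite inE => /eqP ze; move: eCe; rewrite -ze zC.
have xCe : x \in Ce.
  apply/negPn/negP => xC; move/negP: (nsub Ce HCe); apply.
  apply/subsetP => z zC; move: (subsetP Cesub z zC); rewrite /A' !inE.
  have zx : z != x by apply: contraNneq xC => <-.
  by rewrite zx /= => /orP [->|->]; rewrite ?orbT.
have xCf : x \in Cf.
  apply/negPn/negP => xC; move/negP: (nsub Cf HCf); apply.
  apply/subsetP => z zC; move: (subsetP Cfsub z zC); rewrite /A' !inE.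
  have zx : z != x by apply: contraNneq xC => <-.
  by rewrite zx /= => /orP [->|->]; rewrite ?orbT.
have neq : Ce != Cf.
  apply/negP => /eqP eCf; move: (subsetP Cfsub e); rewrite -eCf eCe !inE. rewrite eq_sym (negbTE fe) (negbTE eA). by move=> /(_ isT).
have [C3 HC3 sub] := elim_weak anti c3 (leqnn _) HCe HCf neq xCe xCf.
exfalso; move/negP: (nsub C3 HC3); apply.
apply: (subset_trans sub); apply/subsetP => z; rewrite !inE => /andP [zx /orP [zC|zC]].
  move: (subsetP Cesub z zC); rewrite !inE zx /=.
  by case/orP => ->; rewrite ?orbT.
move: (subsetP Cfsub z zC); rewrite !inE zx /=.
by case/orP => ->; rewrite ?orbT.
Qed.

Theorem theorem5p2 (E : finType) (Cs : {set {set E}}) :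
  (forall C : {set E}, C \in Cs -> C != set0) ->
  (forall C D : {set E}, C \in Cs -> D \in Cs -> C \subset D -> C = D) ->
  ((exists I : {set {set E}}, is_matroid I /\ circuits I = Cs) <-> C3pp Cs).
Proof.
move=> ne anti; split.
  case=> I [M HCs] C1 C2 e1 e2 e H1 H2 he1 he2 he hno.
  rewrite -HCs in H1 H2 hno *.
  move: he1 he2 he; rewrite !inE => /andP [e1C2 e1C1] /andP [e2C1 e2C2] /andP [eC1 eC2].
  have ne1e : e1 != e by apply/eqP => h; move: e1C2; rewrite h eC2.
  have ne2e : e2 != e by apply/eqP => h; move: e2C1; rewrite h eC1.
  have ne12 : e1 != e2 by apply/eqP => h; move: e2C1; rewrite -h e1C1.
  pose Y := (C1 :\ e1) :|: (C2 :\ e2).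
  have HY : Y \in I.
    apply/negPn/negP => /dep_circ [C HC sub]; by move: (hno C HC); rewrite sub.
  have C1sub : C1 \subset e1 |: Y.
    apply/subsetP => z zC; rewrite /Y !inE zC /=.
    by case: (z == e1); rewrite ?orbT.
  have C2sub : C2 \subset e2 |: Y.
    apply/subsetP => z zC; rewrite /Y !inE zC /=.
    by case: (z == e2); rewrite ?orbT.
  have HY1 : (e1 |: Y) :\ e \in I.
    apply/negPn/negP => /dep_circ [C HC sub].
    have eC := circ_unique M HY HC H1 (subset_trans sub (subD1set _ _)) C1sub.
    by move: (subsetP sub e); rewrite eC eC1 !inE eqxx => /(_ isT).
  have HY2 : (e2 |: Y) :\ e \in I.
    apply/negPn/negP => /dep_circ [C HC sub].
    have eC := circ_unique M HY HC H2 (subset_trans sub (subD1set _ _)) C2sub.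
    by move: (subsetP sub e); rewrite eC eC2 !inE eqxx => /(_ isT).
  pose X := e2 |: ((e1 |: Y) :\ e).
  have HX : X \notin I.
    apply/negP => HX.
    have e12 : C1 = C2.
      apply: (circ_unique (x:=e) M HX H1 H2).
        apply/subsetP => z zC; rewrite /X /Y !inE zC /=.
        by case: (z == e); case: (z == e1); case: (z == e2); rewrite /= ?orbT.
      apply/subsetP => z zC; rewrite /X /Y !inE zC /=.
      by case: (z == e); case: (z == e1); case: (z == e2); rewrite /= ?orbT.
    by move: e1C2; rewrite -e12 e1C1.
  have [C3 HC3 sub] := dep_circ HX.
  have /circP [C3I _] := HC3.
  exists C3 => //; split.
    rewrite subUset !sub1set.
    have e2C3 : e2 \in C3.
      apply/negPn/negP => e2C3; move/negP: C3I; apply; apply: (mat_sub M HY1).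
      apply/subsetP => z zC; move: (subsetP sub z zC); rewrite /X inE => /orP [ze|//].
      by move: ze; rewrite inE => /eqP ze; move: e2C3; rewrite -ze zC.
    rewrite e2C3 andbT.
    apply/negPn/negP => e1C3; move/negP: C3I; apply; apply: (mat_sub M HY2).
    apply/subsetP => z zC; move: (subsetP sub z zC).
    have ze1 : z != e1 by apply/eqP => ze; move: e1C3; rewrite -ze zC.
    rewrite /X /Y !inE (negbTE ze1) /=.
    case: (eqVneq z e2) => [->|_] /=; first by rewrite ne2e.
    by case: (z == e).
  apply: (subset_trans sub); apply/subsetP => z; rewrite /X /Y !inE.
  case: (eqVneq z e2) => [->|_] /=; first by rewrite ne2e e2C2 orbT.
  case: (eqVneq z e) => [->|_] //=.
  case: (eqVneq z e1) => [->|_] //=; first by rewrite e1C1.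
move=> c3; exists (Ind Cs); split.
  split.
  - apply/indP => C HC; rewrite subset0; exact: ne.
  - by move=> A B HB AB; apply: (ind_sub HB AB).
  - move=> A B HA HB lt; exact: (aug anti c3 (leqnn _) HA HB lt).
apply/setP => C; apply/circP/idP.
  case=> /indPn [C' HC' sub] H.
  case: (eqVneq C' C) => [<-//|neq].
  have : C' \proper C by rewrite properEneq neq sub.
  by move/H/indP/(_ C' HC'); rewrite subxx.
move=> HC; split.
  by apply/negP => /indP /(_ C HC); rewrite subxx.
move=> D pD; apply/indP => C' HC'; apply/negP => sub.
have eC := anti C' C HC' HC (subset_trans sub (proper_sub pD)).
by move: pD; rewrite -eC properE sub andbF.
Qed.
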